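(* Let $\mathcal R$ be a reaction network and $\mathcal U\subseteq\mathcal S$. Let $r_0\in\mathcal R_{\mathcal U}'$, $m\ge1$, $r_{11},\dots,r_{1m}\in\mathcal R_{\mathcal U}$ and $r_1=\oplus_{i=1}^m r_{1i}$, and suppose $r_0\oplus r_1\notin\overline{\mathcal R}_{\mathcal U}$. Then $r_0\in\mathcal R_{\mathcal U}'\setminus\mathcal R_{\mathcal U}$ and $r_0\oplus(\oplus_{i=1}^k r_{1i})\in\overline{\mathcal R}_{\mathcal U}'\setminus\overline{\mathcal R}_{\mathcal U}$ for $k=1,\dots,m-1$. If moreover $r_0\oplus r_1\in\overline{\mathcal R}_0$, then $r_{1m}\in\mathcal R_{\mathcal U}\setminus\mathcal R_{\mathcal U}'$ and $\oplus_{i=k}^m r_{1i}\in\overline{\mathcal R}_{\mathcal U}\setminus\overline{\mathcal R}_{\mathcal U}'$ for $k=1,\dots,m$.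
   Context: Species $S_1,\dots,S_n$ are the unit vectors of $\mathbb{N}_0^n$ and $\mathcal S=\{S_1,\dots,S_n\}$; for $x\in\mathbb{N}_0^n$, $\mathrm{supp}(x)=\{S_k: x^k>0\}$. A reaction network (RN) is a (possibly infinite) subset $\mathcal R\subseteq\mathbb{N}_0^n\times\mathbb{N}_0^n$ containing no $(y,y')$ with $y=y'$; elements $(y,y')$ are reactions $y\to y'$ with reactant $y$ and product $y'$. For $r_1=(y_1,y_1'),\ r_2=(y_2,y_2')$ define $r_1\oplus r_2=(y_1+0\vee(y_2-y_1'),\ y_2'+0\vee(y_1'-y_2))$ ($\vee$ componentwise maximum); it is associative. $\mathrm{cl}(A)$ is the set of all finite $\oplus$-sums of elements of $A$, including $(0,0)$. For $\mathcal U\subseteq\mathcal S$ and a set $B\subseteq\mathbb{N}_0^n\times\mathbb{N}_0^n$ write $B_{\mathcal U}=\{(y,y')\in B:\mathrm{supp}(y)\cap\mathcal U\neq\emptyset\}$ and $B_{\mathcal U}'=\{(y,y')\in B:\mathrm{supp}(y')\cap\mathcal U\neq\emptyset\}$. Set $\overline{\mathcal R}=\mathrm{cl}(\mathcal R)$, $\mathcal R_0=\mathcal R\setminus(\mathcal R_{\mathcal U}\cup\mathcal R_{\mathcal U}')$ and $\overline{\mathcal R}_0=\overline{\mathcal R}\setminus(\overline{\mathcal R}_{\mathcal U}\cup\overline{\mathcal R}_{\mathcal U}')$. *)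

(* Defs.v *)
From mathcomp Require Import all_boot.
Set Implicit Arguments. Unset Strict Implicit. Unset Printing Implicit Defensive.

(* Complexes: vectors of N_0^n, indexed by species 'I_n. *)
Definition cplx (n : nat) := {ffun 'I_n -> nat}.
(* A reaction y -> y' is the pair (y, y'). *)
Definition reaction (n : nat) := (cplx n * cplx n)%type.

Definition vadd n (x y : cplx n) : cplx n := [ffun i => x i + y i].
(* componentwise 0 \/ (x - y), i.e. truncated subtraction on nat *)
Definition vposdiff n (x y : cplx n) : cplx n := [ffun i => x i - y i].
Definition vzero n : cplx n := [ffun => 0].

Definition oplus n (r1 r2 : reaction n) : reaction n :=
  (vadd r1.1 (vposdiff r2.1 r1.2), vadd r2.2 (vposdiff r1.2 r2.1)).

Definition rzero n : reaction n := (vzero n, vzero n).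

Definition oplus_seq n (s : seq (reaction n)) : reaction n :=
  foldr (@oplus n) (rzero n) s.

(* oplus_{i=a}^b rs i  =  rs a (+) rs (a+1) (+) ... (+) rs b *)
Definition oplus_range n (rs : nat -> reaction n) (a b : nat) : reaction n :=
  oplus_seq [seq rs i | i <- iota a (b.+1 - a)].

Definition is_RN n (R : reaction n -> Prop) : Prop :=
  forall r, R r -> r.1 <> r.2.

Definition cl n (A : reaction n -> Prop) : reaction n -> Prop :=
  fun r => exists s : seq (reaction n), (forall x, x \in s -> A x) /\ r = oplus_seq s.

Definition supp_meets n (U : {set 'I_n}) (x : cplx n) : Prop :=
  exists i, i \in U /\ 0 < x i.

Definition sub_U n (U : {set 'I_n}) (B : reaction n -> Prop) : reaction n -> Prop :=
  fun r => B r /\ supp_meets U r.1.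
Definition sub_U' n (U : {set 'I_n}) (B : reaction n -> Prop) : reaction n -> Prop :=
  fun r => B r /\ supp_meets U r.2.
Definition sub_0 n (U : {set 'I_n}) (B : reaction n -> Prop) : reaction n -> Prop :=
  fun r => B r /\ ~ sub_U U B r /\ ~ sub_U' U B r.

(* Main.v *)
Require Import Defs.
From mathcomp Require Import all_boot.
From mathcomp Require Import zify.

Section H.
Variable n : nat.
Implicit Types r s t : reaction n.

Lemma oplusA r s t : oplus (oplus r s) t = oplus r (oplus s t).
Proof.
case: r => [a a']; case: s => [b b']; case: t => [c c']; rewrite /oplus /=; congr pair;
  apply/ffunP => i; rewrite /vadd /vposdiff /vzero /= !ffunE /=; lia.
Qed.

Lemma oplus0r r : oplus (rzero n) r = r.
Proof.
case: r => [a a']; rewrite /oplus /=; congr pair;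
  apply/ffunP => i; rewrite /vadd /vposdiff /vzero /= !ffunE /=; lia.
Qed.

Lemma oplusr0 r : oplus r (rzero n) = r.
Proof.
case: r => [a a']; rewrite /oplus /=; congr pair;
  apply/ffunP => i; rewrite /vadd /vposdiff /vzero /= !ffunE /=; lia.
Qed.

Lemma oplus_seq_cat (s1 s2 : seq (reaction n)) :
  oplus_seq (s1 ++ s2) = oplus (oplus_seq s1) (oplus_seq s2).
Proof.
elim: s1 => [|x s IH] /=; first by rewrite oplus0r.
by rewrite IH oplusA.
Qed.

Lemma cl_oplus (R : reaction n -> Prop) r s : cl R r -> cl R s -> cl R (oplus r s).
Proof.
move=> [s1 [H1 ->]] [s2 [H2 ->]]; exists (s1 ++ s2); split; last by rewrite oplus_seq_cat.
by move=> x; rewrite mem_cat => /orP [/H1|/H2].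
Qed.

Lemma cl_R (R : reaction n -> Prop) r : R r -> cl R r.
Proof.
move=> Hr; exists [:: r]; split; last by rewrite /= oplusr0.
by move=> x; rewrite inE => /eqP ->.
Qed.

Lemma react_ge r s i : r.1 i <= (oplus r s).1 i.
Proof. rewrite /oplus /= !ffunE; lia. Qed.

Lemma prod_ge r s i : s.2 i <= (oplus r s).2 i.
Proof. rewrite /oplus /= !ffunE; lia. Qed.

Lemma meets_mono U (x y : cplx n) : supp_meets U x -> (forall i, x i <= y i) -> supp_meets U y.
Proof. move=> [i [Hi Hx]] Hle; exists i; split => //; exact: leq_trans Hx (Hle i). Qed.

Lemma range_split (rs : nat -> reaction n) a b c : a <= b.+1 -> b <= c ->
  oplus_range rs a c = oplus (oplus_range rs a b) (oplus_range rs b.+1 c).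
Proof.
move=> Hab Hbc; rewrite /oplus_range -oplus_seq_cat -map_cat.
have -> : c.+1 - a = (b.+1 - a) + (c.+1 - b.+1) by lia.
rewrite iotaD; have -> : a + (b.+1 - a) = b.+1 by lia.
by [].
Qed.

Lemma range_cons (rs : nat -> reaction n) k m : k <= m ->
  oplus_range rs k m = oplus (rs k) (oplus_range rs k.+1 m).
Proof.
move=> Hkm; rewrite /oplus_range.
have -> : m.+1 - k = (m - k).+1 by lia.
by rewrite /= subSS.
Qed.

Lemma range_one (rs : nat -> reaction n) k : oplus_range rs k k = rs k.
Proof. rewrite (@range_cons rs k k) // /oplus_range subnn /=; exact: oplusr0. Qed.

Lemma range_cl (R : reaction n -> Prop) (rs : nat -> reaction n) a b :
  (forall i, a <= i <= b -> R (rs i)) -> cl R (oplus_range rs a b).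
Proof.
move=> H; exists [seq rs i | i <- iota a (b.+1 - a)]; split => //.
move=> x /mapP [i]; rewrite mem_iota => Hi ->; apply: H; lia.
Qed.
End H.

Theorem lemma4p5 (n : nat) (R : reaction n -> Prop) (U : {set 'I_n})
    (r0 : reaction n) (m : nat) (r1 : nat -> reaction n) :
  is_RN R ->
  sub_U' U R r0 ->
  1 <= m ->
  (forall i, 1 <= i <= m -> sub_U U R (r1 i)) ->
  ~ sub_U U (cl R) (oplus r0 (oplus_range r1 1 m)) ->
  ((sub_U' U R r0 /\ ~ sub_U U R r0) /\
   (forall k, 1 <= k <= m.-1 ->
      sub_U' U (cl R) (oplus r0 (oplus_range r1 1 k)) /\
      ~ sub_U U (cl R) (oplus r0 (oplus_range r1 1 k)))) /\
  (sub_0 U (cl R) (oplus r0 (oplus_range r1 1 m)) ->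
   (sub_U U R (r1 m) /\ ~ sub_U' U R (r1 m)) /\
   (forall k, 1 <= k <= m ->
      sub_U U (cl R) (oplus_range r1 k m) /\
      ~ sub_U' U (cl R) (oplus_range r1 k m))).
Proof.
move=> _ H0 Hm H1 Hnot.
have HR i : 1 <= i <= m -> R (r1 i) by move=> /H1 [].
have Hcl0 : cl R r0 by apply: cl_R; case: H0.
have Hclr a b : 1 <= a -> b <= m -> cl R (oplus_range r1 a b).
  by move=> Ha Hb; apply: range_cl => i Hi; apply: HR; lia.
have Hclm : cl R (oplus r0 (oplus_range r1 1 m)) by apply: cl_oplus => //; apply: Hclr.
have Hmono k : k <= m -> forall i,
    (oplus r0 (oplus_range r1 1 k)).1 i <= (oplus r0 (oplus_range r1 1 m)).1 i.
  move=> Hk i; rewrite (@range_split _ r1 1 k m); [|lia|lia].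
  rewrite -oplusA; exact: react_ge.
split; [split; [split=> // [[_ Hr]] |] |].
- apply: Hnot; split=> //; apply: meets_mono Hr _ => i; exact: react_ge.
- move=> k Hk.
  have Hclk : cl R (oplus r0 (oplus_range r1 1 k)) by apply: cl_oplus => //; apply: Hclr; lia.
  have NU : ~ sub_U U (cl R) (oplus r0 (oplus_range r1 1 k)).
    move=> [_ Hs]; apply: Hnot; split=> //; apply: meets_mono Hs _; apply: Hmono; lia.
  split=> //; split=> //.
  have [_ [i [Hi Hpos]]] := H1 k.+1 ltac:(lia).
  case: (posnP ((oplus r0 (oplus_range r1 1 k)).2 i)) => Hx; last by exists i.
  exfalso; apply: Hnot; split=> //; exists i; split=> //.
  apply: leq_trans _ (Hmono k.+1 ltac:(lia) i).
  rewrite (@range_split _ r1 1 k k.+1); [|lia|lia].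
  have -> : oplus_range r1 k.+1 k.+1 = r1 k.+1.
    exact: range_one.
  rewrite -oplusA.
  set x := oplus r0 _.
  have -> : (oplus x (r1 k.+1)).1 i = x.1 i + ((r1 k.+1).1 i - x.2 i) by rewrite /oplus /= !ffunE.
  rewrite Hx; lia.
- move=> [_ [_ HnU']].
  have Hk k : 1 <= k <= m ->
      sub_U U (cl R) (oplus_range r1 k m) /\ ~ sub_U' U (cl R) (oplus_range r1 k m).
    move=> Hk; split.
      split; first by apply: Hclr; lia.
      have [_ Hs] := H1 k Hk.
      rewrite (@range_cons _ r1 k m); [|lia].
      apply: meets_mono Hs _ => i; exact: react_ge.
    move=> [_ Hs]; apply: HnU'; split=> //; apply: meets_mono Hs _ => i.
    rewrite (@range_split _ r1 1 k.-1 m); [|lia|lia].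
    have -> : k.-1.+1 = k by lia.
    rewrite -oplusA; exact: prod_ge.
  split=> //; split; first by apply: H1; lia.
  move=> [_ Hs]; have [_ Hk'] := Hk m ltac:(lia); apply: Hk'; split.
    by apply: Hclr; lia.
  rewrite range_one; exact Hs.
Qed.
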